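(* Let $\|\cdot\|$ be a norm on $\mathbb{R}^d$ and $T:\mathbb{R}^d\to\mathbb{R}^d$ nonexpansive for it with $\operatorname{Fix}T\neq\emptyset$. Let $\tilde T:\mathbb{R}^d\times\Xi\to\mathbb{R}^d$ be a stochastic oracle with $\mathbb{E}(\tilde T(x,\xi))=Tx$ for $\xi\sim\mathcal{D}_x$, and with uniformly bounded variance: $\sup_{x}\mathbb{E}(\|\tilde T(x,\xi)-Tx\|_2^2)\le\sigma^2$. Consider the stochastic Halpern method: given $x^0$, for $n=1,\dots,N$, draw $k_n$ independent samples $\xi_{n,1},\dots,\xi_{n,k_n}\sim\mathcal{D}_{x^{n-1}}$ and set $x^n=(1-\beta_n)x^0+\beta_n\frac{1}{k_n}\sum_{j=1}^{k_n}\tilde T(x^{n-1},\xi_{n,j})$, with $\beta_n=\frac{n}{n+1}$. Then, given $\varepsilon>0$, this method with $k_n=n^4$ returns a point $x^N$ with $\mathbb{E}(\|x^N-Tx^N\|)\le\varepsilon$ using at most $\tilde O(\varepsilon^{-5})$ queries to the stochastic oracle $\tilde T$.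
   Context: $\|\cdot\|_2$ is the Euclidean norm. $\tilde O$ denotes big-$O$ ignoring logarithmic factors. The number of queries is the total number $\sum_{n=1}^N k_n$ of evaluations of $\tilde T$. The stepsize $\beta_n=n/(n+1)$ is the one used throughout the paper's explicit results. *)

(* Defs.v *)
From HB Require Import structures.
From mathcomp Require Import all_boot all_order all_algebra.
From mathcomp Require Import all_classical all_reals all_analysis.
From mathcomp Require Import measurable_realfun.
Set Implicit Arguments. Unset Strict Implicit. Unset Printing Implicit Defensive.
Import Order.TTheory GRing.Theory Num.Theory.
Local Open Scope classical_set_scope.
Local Open Scope ring_scope.

(* R^d with its Borel sigma-algebra (generated by the open sets of the
   product topology on row vectors). Definitionally equal to 'rV[R]_d. *)
Section Rd_def.
Import numFieldNormedType.Exports.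
Variables (R : realType) (d : nat).
Definition Rd := g_sigma_algebraType (@open 'rV[R]_d).
HB.instance Definition _ := Measurable.on Rd.
End Rd_def.

Definition is_norm (R : realType) (d : nat) (nrm : 'rV[R]_d -> R) : Prop :=
  [/\ forall x, nrm x = 0 -> x = 0,
      forall (a : R) x, nrm (a *: x) = `|a| * nrm x
    & forall x y, nrm (x + y) <= nrm x + nrm y].

Definition sqnorm2 (R : realType) (d : nat) (v : 'rV[R]_d) : R :=
  \sum_(i < d) (v ord0 i) ^+ 2.

Definition nonexpansive (R : realType) (d : nat) (nrm : 'rV[R]_d -> R)
  (T : 'rV[R]_d -> 'rV[R]_d) : Prop :=
  forall x y, nrm (T x - T y) <= nrm (x - y).

(* Integral of g(xi_1,...,xi_k) for xi_1,...,xi_k i.i.d. with law P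
   (iterated integral against the k-fold product of P). *)
Fixpoint iid_int (R : realType) (dX : measure_display) (Xi : measurableType dX)
  (P : {measure set Xi -> \bar R}) (k : nat) (g : seq Xi -> \bar R) : \bar R :=
  match k with
  | 0 => g [::]
  | k'.+1 => (\int[P]_xi iid_int P k' (fun s => g (xi :: s)))%E
  end.

(* One step of the stochastic Halpern method at iteration n from x^{n-1} = x
   with the drawn samples s = [xi_{n,1}; ...; xi_{n,k_n}]. *)
Definition halpern_step (R : realType) (d : nat) (Xi : Type)
  (Tt : 'rV[R]_d -> Xi -> 'rV[R]_d) (x0 : 'rV[R]_d)
  (beta : nat -> R) (k : nat -> nat) (n : nat) (x : 'rV[R]_d) (s : seq Xi)
  : 'rV[R]_d :=
  (1 - beta n) *: x0 + beta n *: ((k n)%:R^-1 *: \sum_(xi <- s) Tt x xi).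

(* halpern_exp ... r n x f = E[ f(x^{n+r}) | x^n = x ], where at each
   iteration m the k_m samples are drawn i.i.d. from D_{x^{m-1}}
   (backward recursion along the Markov chain of iterates). *)
Fixpoint halpern_exp (R : realType) (d : nat) (dX : measure_display)
  (Xi : measurableType dX) (D : R.-pker (Rd R d) ~> Xi)
  (Tt : 'rV[R]_d -> Xi -> 'rV[R]_d) (x0 : 'rV[R]_d)
  (beta : nat -> R) (k : nat -> nat) (f : 'rV[R]_d -> \bar R)
  (r n : nat) (x : 'rV[R]_d) : \bar R :=
  match r with
  | 0 => f x
  | r'.+1 => iid_int (D x) (k n.+1)
      (fun s => halpern_exp D Tt x0 beta k f r' n.+1
                  (halpern_step Tt x0 beta k n.+1 x s))
  end.

Definition halpern_expect (R : realType) (d : nat) (dX : measure_display)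
  (Xi : measurableType dX) (D : R.-pker (Rd R d) ~> Xi)
  (Tt : 'rV[R]_d -> Xi -> 'rV[R]_d) (x0 : 'rV[R]_d)
  (beta : nat -> R) (k : nat -> nat) (N : nat) (f : 'rV[R]_d -> \bar R)
  : \bar R :=
  halpern_exp D Tt x0 beta k f N 0 x0.

(* Main.v *)
Require Import Defs.
From HB Require Import structures.
From mathcomp Require Import all_boot all_order all_algebra.
From mathcomp Require Import all_classical all_reals all_analysis.
From mathcomp Require Import measurable_realfun.
From mathcomp Require Import ring lra.
Import Order.TTheory GRing.Theory Num.Theory.
Local Open Scope classical_set_scope.
Local Open Scope ring_scope.
Lemma ge0_le_integral_nm d (T : measurableType d) (R : realType)
  (mu : {measure set T -> \bar R}) (f g : T -> \bar R) :
  (forall x, (0 <= f x)%E) -> (forall x, (f x <= g x)%E) ->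
  (\int[mu]_x f x <= \int[mu]_x g x)%E.
Proof.
move=> f0 fg.
have g0 : forall x, (0 <= g x)%E by move=> x; exact: le_trans (f0 x) (fg x).
rewrite (ge0_integralTE _ f0) (ge0_integralTE _ g0).
apply: ereal_sup_le => _ [h hf <-]; exists h => //= x.
exact: le_trans (hf x) (fg x).
Qed.

Lemma prob_int_cst d (T : measurableType d) (R : realType)
  (mu : {measure set T -> \bar R}) (Hmu : mu setT = 1%E) (c : R) :
  mu.-integrable setT (EFin \o cst c).
Proof.
apply/integrableP; split; first exact/measurable_EFinP/measurable_cst.
rewrite (eq_integral (cst (`|c|)%:E)); last by move=> x _.
by rewrite integral_cst // Hmu mule1 ltry.
Qed.

Lemma prob_integral_cst d (T : measurableType d) (R : realType)
  (mu : {measure set T -> \bar R}) (Hmu : mu setT = 1%E) (c : R) :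
  (\int[mu]_x (EFin \o cst c) x = c%:E)%E.
Proof.
rewrite (eq_integral (cst c%:E)); last by move=> x _.
by rewrite integral_cst // Hmu mule1.
Qed.
Lemma intQ d (Xi : measurableType d) (R : realType) (n : nat)
  (P : {measure set Xi -> \bar R}) (HP : P setT = 1%E)
  (u : Xi -> 'rV[R]_n) (m : 'rV[R]_n) (s2 : R)
  (Hint : forall i, P.-integrable setT (fun xi => (u xi ord0 i)%:E) /\
      (\int[P]_xi (u xi ord0 i)%:E = (m ord0 i)%:E)%E)
  (Hvar : (\int[P]_xi (sqnorm2 (u xi - m))%:E <= s2%:E)%E)
  (w : 'rV[R]_n) (al C : R) : 0 <= al ->
  (\int[P]_xi (al * sqnorm2 (w + (u xi - m)) + C)%:E
     <= (al * (sqnorm2 w + s2) + C)%:E)%E.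
Proof.
move=> al0.
pose v i xi := u xi ord0 i - m ord0 i.
pose f1 xi := \sum_(i < n) 2 * w ord0 i * v i xi.
pose f2 xi := sqnorm2 (u xi - m).
have mu i : measurable_fun setT (fun xi => u xi ord0 i).
  by apply/measurable_EFinP; case: (Hint i) => /measurable_int.
have mv i : measurable_fun setT (v i).
  by apply: measurable_funB => //; exact: measurable_cst.
have f2E xi : f2 xi = \sum_(i < n) (v i xi) ^+ 2.
  by rewrite /f2 /sqnorm2; apply: eq_bigr => i _; rewrite !mxE.
have mf2 : measurable_fun setT f2.
  rewrite (_ : f2 = fun xi => \sum_(i < n) (v i xi) ^+ 2); last exact: funext.
  by apply: measurable_sum => i; exact: measurable_funX.
have f20 xi : 0 <= f2 xi by rewrite f2E; apply: sumr_ge0 => i _; exact: sqr_ge0.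
have if2 : P.-integrable setT (fun xi => (f2 xi)%:E).
  apply/integrableP; split; first exact/measurable_EFinP.
  under eq_integral do rewrite gee0_abs ?lee_fin//.
  by apply: le_lt_trans Hvar _; exact: ltry.
have iv i : P.-integrable setT (fun xi => (v i xi)%:E).
  have := integrableB measurableT (proj1 (Hint i))
     (@prob_int_cst _ _ _ P HP (m ord0 i)).
  by apply: eq_integrable => // xi _; rewrite /v EFinB.
have intv i : (\int[P]_xi (v i xi)%:E = 0)%E.
  rewrite (_ : (fun xi => (v i xi)%:E) = ((fun xi => (u xi ord0 i)%:E) \- (EFin \o cst (m ord0 i)))%E); last first.
    by apply: funext => xi; rewrite /v EFinB.
  rewrite integralB //; last 2 first.
  - exact: (proj1 (Hint i)).
  - exact: (@prob_int_cst _ _ _ P HP).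
  rewrite (proj2 (Hint i)) (eq_integral (cst (m ord0 i)%:E)) //.
  by rewrite integral_cst //= HP mule1 subee.
have if1 : P.-integrable setT (fun xi => (f1 xi)%:E).
  rewrite (_ : (fun xi => (f1 xi)%:E) = (fun xi => \sum_(i < n) (2 * w ord0 i)%:E * (v i xi)%:E)%E); last first.
    by apply: funext => xi; rewrite /f1 -sumEFin; apply: eq_bigr => i _; rewrite EFinM.
  by apply: integrable_sum => // i _; apply: integrableZl => //; exact: iv.
have intf1 : (\int[P]_xi (f1 xi)%:E = 0)%E.
  rewrite (_ : (fun xi => (f1 xi)%:E) = (fun xi => \sum_(i < n) (2 * w ord0 i)%:E * (v i xi)%:E)%E); last first.
    by apply: funext => xi; rewrite /f1 -sumEFin; apply: eq_bigr => i _; rewrite EFinM.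
  rewrite integral_sum //; last by move=> i; exact: integrableZl.
  by rewrite big1 // => i _; rewrite integralZl // intv mule0.
have ic : P.-integrable setT (EFin \o cst (al * sqnorm2 w + C)).
  exact: (@prob_int_cst _ _ _ P HP).
rewrite (eq_integral (fun xi => (al%:E * (f2 xi)%:E) + ((al%:E * (f1 xi)%:E) + (EFin \o cst (al * sqnorm2 w + C)%R) xi)))%E; last first.
  move=> xi _; rewrite /= -!EFinM -!EFinD; congr (_%:E).
  rewrite f2E /f1 /sqnorm2.
  have -> : \sum_(i < n) (w + (u xi - m)) ord0 i ^+ 2 =
     \sum_(i < n) (w ord0 i ^+ 2 + 2 * w ord0 i * v i xi + v i xi ^+ 2).
    by apply: eq_bigr => i _; rewrite !mxE /v; ring.
  rewrite !big_split /= !mulrDr; ring.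
rewrite integralD //; last first.
  apply: integrableD => //; exact: integrableZl.
  exact: integrableZl.
rewrite integralD //; last exact: integrableZl.
rewrite !integralZl // intf1 mule0 add0e (@prob_integral_cst _ _ _ P HP).
rewrite (_ : (al * (sqnorm2 w + s2) + C)%:E = al%:E * s2%:E + (al * sqnorm2 w + C)%:E)%E; last first.
  by rewrite -EFinM -EFinD; congr (_%:E); ring.
by apply: leeD2r; apply: lee_wpmul2l => //; rewrite lee_fin.
Qed.

Lemma sqrt_tangent (R : realType) (y u0 : R) : 0 <= y -> 0 < u0 ->
  Num.sqrt y <= (y + u0) / (2 * Num.sqrt u0).
Proof.
move=> y0 u00.
have q0 : 0 < Num.sqrt u0 by rewrite sqrtr_gt0.
rewrite ler_pdivlMr; last by rewrite mulr_gt0.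
have hy : y = Num.sqrt y ^+ 2 by rewrite sqr_sqrtr.
have hu : u0 = Num.sqrt u0 ^+ 2 by rewrite sqr_sqrtr // ltW.
rewrite [in X in _ <= X]hy [in X in _ <= X]hu.
set p := Num.sqrt y; set q := Num.sqrt u0.
have : 0 <= (p - q) ^+ 2 by exact: sqr_ge0.
rewrite sqrrB => h; lra.
Qed.

Lemma iid_int_ge0 (R : realType) dX (Xi : measurableType dX)
  (P : {measure set Xi -> \bar R}) k g :
  (forall s, size s = k -> (0 <= g s)%E) -> (0 <= iid_int P k g)%E.
Proof.
elim: k g => [|k IH] g H /=; first exact: H.
apply: integral_ge0 => xi _; apply: IH => s hs; apply: H; by rewrite /= hs.
Qed.

Lemma iid_int_le (R : realType) dX (Xi : measurableType dX)
  (P : {measure set Xi -> \bar R}) k g h :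
  (forall s, size s = k -> (0 <= g s)%E /\ (g s <= h s)%E) ->
  (iid_int P k g <= iid_int P k h)%E.
Proof.
elim: k g h => [|k IH] g h H /=; first exact: (proj2 (H [::] erefl)).
apply: ge0_le_integral_nm => xi.
  by apply: iid_int_ge0 => s hs; apply: (proj1 (H (xi :: s) _)); rewrite /= hs.
by apply: IH => s hs; apply: H; rewrite /= hs.
Qed.

Lemma iidA d (Xi : measurableType d) (R : realType) (n : nat)
  (P : {measure set Xi -> \bar R}) (HP : P setT = 1%E)
  (u : Xi -> 'rV[R]_n) (m : 'rV[R]_n) (s2 : R)
  (Hint : forall i, P.-integrable setT (fun xi => (u xi ord0 i)%:E) /\
      (\int[P]_xi (u xi ord0 i)%:E = (m ord0 i)%:E)%E)
  (Hvar : (\int[P]_xi (sqnorm2 (u xi - m))%:E <= s2%:E)%E)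
  (s2pos : 0 < s2) :
  forall (k : nat) (w : 'rV[R]_n) (a b : R), 0 <= a -> 0 <= b ->
  (iid_int P k (fun s => (a * Num.sqrt (sqnorm2 (w + \sum_(xi <- s) (u xi - m))) + b)%:E)
    <= (a * Num.sqrt (sqnorm2 w + k%:R * s2) + b)%:E)%E.
Proof.
have sq0 (v : 'rV[R]_n) : 0 <= sqnorm2 v.
  by apply: sumr_ge0 => i _; exact: sqr_ge0.
elim=> [|k IH] w a b a0 b0 /=.
  by rewrite big_nil addr0 mul0r addr0.
set u0 := sqnorm2 w + k.+1%:R * s2.
have u00 : 0 < u0.
  by rewrite /u0 ltr_wpDl // mulr_gt0 // ltr0n.
pose al := a / (2 * Num.sqrt u0).
have al0 : 0 <= al by rewrite /al divr_ge0 // mulr_ge0 // sqrtr_ge0.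
pose C := al * (k%:R * s2 + u0) + b.
apply: (@le_trans _ _ (\int[P]_xi (a * Num.sqrt (sqnorm2 (w + (u xi - m)) + k%:R * s2) + b)%:E)%E).
  apply: ge0_le_integral_nm => xi.
    apply: iid_int_ge0 => s _; rewrite lee_fin addr_ge0 // mulr_ge0 // sqrtr_ge0.
  rewrite (_ : (fun s => _) = (fun s => (a * Num.sqrt (sqnorm2 ((w + (u xi - m)) + \sum_(xi <- s) (u xi - m))) + b)%:E)); last first.
    by apply: funext => s; rewrite big_cons addrA.
  exact: IH.
apply: (@le_trans _ _ (\int[P]_xi (al * sqnorm2 (w + (u xi - m)) + C)%:E)%E).
  apply: ge0_le_integral_nm => xi.
    by rewrite lee_fin addr_ge0 // mulr_ge0 // sqrtr_ge0.
  rewrite lee_fin /C.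
  have Y0 : 0 <= sqnorm2 (w + (u xi - m)) + k%:R * s2.
    by rewrite addr_ge0 // mulr_ge0 // ltW.
  have h := @sqrt_tangent R _ u0 Y0 u00.
  rewrite (_ : al * sqnorm2 (w + (u xi - m)) + (al * (k%:R * s2 + u0) + b) =
     a * ((sqnorm2 (w + (u xi - m)) + k%:R * s2 + u0) / (2 * Num.sqrt u0)) + b); last first.
    by rewrite /al; ring.
  by rewrite lerD2r; apply: ler_wpM2l.
apply: le_trans (@intQ _ _ _ _ P HP u m s2 Hint Hvar w al C al0) _.
rewrite lee_fin /C addrA lerD2r.
have q0 : 0 < Num.sqrt u0 by rewrite sqrtr_gt0.
have e : sqnorm2 w + s2 + k%:R * s2 = u0 by rewrite /u0 -natr1; ring.
rewrite -mulrDr addrA e /al.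
have hu : u0 = Num.sqrt u0 ^+ 2 by rewrite sqr_sqrtr // ltW.
move: q0 hu; set q := Num.sqrt u0 => q0 hu.
rewrite hu le_eqVlt; apply/orP; left; apply/eqP; field.
by rewrite gt_eqF.
Qed.

Section NormFacts.
Context {R : realType} {d : nat} {nrm : 'rV[R]_d -> R}.
Hypothesis Hn : is_norm nrm.

Lemma nrm0 : nrm 0 = 0.
Proof. case: Hn => _ hZ _. by rewrite -(scale0r (0 : 'rV[R]_d)) hZ normr0 mul0r. Qed.

Lemma nrmN x : nrm (- x) = nrm x.
Proof. case: Hn => _ hZ _. by rewrite -scaleN1r hZ normrN normr1 mul1r. Qed.

Lemma nrmZ a x : nrm (a *: x) = `|a| * nrm x.
Proof. by case: Hn => _ hZ _. Qed.

Lemma nrmD x y : nrm (x + y) <= nrm x + nrm y.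
Proof. by case: Hn. Qed.

Lemma nrm_ge0 x : 0 <= nrm x.
Proof.
have := nrmD x (- x); rewrite subrr nrm0 nrmN => h.
by rewrite -(@pmulr_rge0 _ 2) // mulr2n mulrDl mul1r.
Qed.

Lemma nrmB x y : nrm (x - y) = nrm (y - x).
Proof. by rewrite -nrmN opprB. Qed.

Lemma nrm_tri x y z : nrm (x - z) <= nrm (x - y) + nrm (y - z).
Proof. by rewrite (_ : x - z = (x - y) + (y - z)) ?nrmD // addrA subrK. Qed.

Lemma nrm_sum I (s : seq I) (F : I -> 'rV[R]_d) :
  nrm (\sum_(i <- s) F i) <= \sum_(i <- s) nrm (F i).
Proof.
elim: s => [|i s IH]; first by rewrite !big_nil nrm0.
rewrite !big_cons; apply: le_trans (nrmD _ _) _; by rewrite lerD2l.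
Qed.

Definition cN := \sum_(j < d) nrm (delta_mx 0 j).

Lemma cN_ge0 : 0 <= cN.
Proof. by apply: sumr_ge0 => j _; exact: nrm_ge0. Qed.

Lemma nrm_le_euclid (u : 'rV[R]_d) : nrm u <= cN * Num.sqrt (sqnorm2 u).
Proof.
rewrite {1}(row_sum_delta u).
apply: le_trans (nrm_sum _ _ _) _.
rewrite /cN mulr_suml; apply: ler_sum => j _.
rewrite nrmZ mulrC; apply: ler_wpM2l; first exact: nrm_ge0.
rewrite -sqrtr_sqr; apply: ler_wsqrtr.
rewrite /sqnorm2 (bigD1 j) //= lerDl; apply: sumr_ge0 => i _; exact: sqr_ge0.
Qed.

End NormFacts.

Definition bet (R : realType) (j : nat) : R := j%:R / (j.+1)%:R.

Fixpoint ydet (R : realType) (d : nat) (T : 'rV[R]_d -> 'rV[R]_d) (x0 : 'rV[R]_d) (n : nat) : 'rV[R]_d :=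
  match n with
  | 0 => x0
  | n'.+1 => (1 - bet R n) *: x0 + bet R n *: T (ydet R d T x0 n')
  end.

Definition Hs (R : realType) (n : nat) : R := \sum_(1 <= j < n.+1) (j%:R)^-1.

Lemma bet_ge0 (R : realType) j : 0 <= bet R j.
Proof. by rewrite /bet divr_ge0. Qed.

Lemma bet_le1 (R : realType) j : bet R j <= 1.
Proof. by rewrite /bet ler_pdivrMr ?ltr0n // mul1r ler_nat. Qed.

Lemma one_bet (R : realType) j : 1 - bet R j = (j.+1%:R)^-1.
Proof.
have hj : j.+1%:R != 0 :> R by rewrite pnatr_eq0.
move: hj; rewrite /bet -natr1 => hj; field.
by [].
Qed.

Lemma Hs_ge0 (R : realType) n : 0 <= Hs R n.
Proof. by apply: sumr_ge0 => j _; rewrite invr_ge0. Qed.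

Lemma HsS (R : realType) n : Hs R n.+1 = Hs R n + (n.+1%:R)^-1.
Proof. by rewrite /Hs big_nat_recr. Qed.

Section Det.
Variables (R : realType) (d : nat) (nrm : 'rV[R]_d -> R) (T : 'rV[R]_d -> 'rV[R]_d)
  (x0 z : 'rV[R]_d).
Hypothesis Hn : is_norm nrm.
Hypothesis HT : nonexpansive nrm T.
Hypothesis Hz : T z = z.
Let R0 := nrm (x0 - z).
Let y := ydet R d T x0.

Lemma ydet_bnd n : nrm (y n - z) <= R0.
Proof.
elim: n => [|n IH] /=; first by [].
rewrite /y /=.
rewrite (_ : _ - z = (1 - bet R n.+1) *: (x0 - z) + bet R n.+1 *: (T (ydet R d T x0 n) - T z)); last first.
  by apply/rowP => i; rewrite !mxE Hz; ring.
apply: le_trans (nrmD Hn _ _) _.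
rewrite !(nrmZ Hn) !ger0_norm ?subr_ge0 ?bet_le1 ?bet_ge0 //.
have h1 := HT (ydet R d T x0 n) z.
have h2 : bet R n.+1 * nrm (T (ydet R d T x0 n) - T z) <= bet R n.+1 * R0.
  by apply: ler_wpM2l; [exact: bet_ge0| exact: le_trans h1 IH].
have b1 := bet_le1 R n.+1; rewrite /R0 in h2 *; nra.
Qed.

Lemma Ty_x0 n : nrm (T (y n) - x0) <= 2 * R0.
Proof.
rewrite (_ : T (y n) - x0 = (T (y n) - T z) + (z - x0)); last by rewrite Hz addrA subrK.
apply: le_trans (nrmD Hn _ _) _.
rewrite (nrmB Hn z) -/R0.
have := le_trans (HT (y n) z) (ydet_bnd n); lra.
Qed.

Lemma ydiff n : (n.+2%:R) * nrm (y n.+1 - y n) <= 2 * R0 * (1 + Hs R n).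
Proof.
have R00 : 0 <= R0 by exact: nrm_ge0.
elim: n => [|n IH].
  rewrite /Hs big_geq // addr0 mulr1 /y /=.
  rewrite (_ : _ - x0 = bet R 1 *: (T x0 - x0)); last first.
    by apply/rowP => i; rewrite !mxE; ring.
  rewrite (nrmZ Hn) ger0_norm ?bet_ge0 // /bet mulrA.
  rewrite (_ : 2%:R * (1%:R / 2%:R) = 1 :> R) ?mul1r; first exact: (Ty_x0 0).
  by rewrite mulfV // pnatr_eq0.
rewrite (_ : y n.+2 - y n.+1 = (bet R n.+2 - bet R n.+1) *: (T (y n) - x0)
   + bet R n.+2 *: (T (y n.+1) - T (y n))); last first.
  by apply/rowP => i; rewrite /y /= !mxE; ring.
have m0 : 0 < n.+1%:R :> R by rewrite ltr0n.
set m := n.+1%:R : R.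
have e2 : n.+2%:R = m + 1 :> R by rewrite -natr1.
have e3 : n.+3%:R = m + 1 + 1 :> R by rewrite -natr1 e2.
have eb : bet R n.+2 - bet R n.+1 = ((m + 1) * (m + 1 + 1))^-1.
  rewrite /bet e2 e3 -/m; field.
  by apply/andP; split; apply/negP => /eqP; lra.
have eb2 : bet R n.+2 = (m + 1) / (m + 1 + 1) by rewrite /bet e2 e3.
rewrite eb eb2 e3 HsS -/m.
have h := nrmD Hn (((m + 1) * (m + 1 + 1))^-1 *: (T (y n) - x0)) (((m + 1) / (m + 1 + 1)) *: (T (y n.+1) - T (y n))).
have g1 : 0 <= ((m + 1) * (m + 1 + 1))^-1 by rewrite invr_ge0 mulr_ge0 //; lra.
have g2 : 0 <= (m + 1) / (m + 1 + 1) by rewrite divr_ge0 //; lra.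
rewrite !(nrmZ Hn) (ger0_norm g1) (ger0_norm g2) in h.
have h1 := Ty_x0 n.
have h2 := HT (y n.+1) (y n).
rewrite e2 in IH.
have hx : 0 <= m + 1 + 1 by lra.
apply: le_trans (ler_wpM2l hx h) _.
rewrite mulrDr.
have -> : (m + 1 + 1) * (((m + 1) * (m + 1 + 1))^-1 * nrm (T (y n) - x0)) = nrm (T (y n) - x0) / (m + 1).
  by field; apply/andP; split; apply/negP => /eqP; lra.
have -> : (m + 1 + 1) * ((m + 1) / (m + 1 + 1) * nrm (T (y n.+1) - T (y n))) = (m + 1) * nrm (T (y n.+1) - T (y n)).
  by field; apply/negP => /eqP; lra.
have i1 : nrm (T (y n) - x0) / (m + 1) <= 2 * R0 / m.
  apply: ler_pM => //; first exact: nrm_ge0.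
  by rewrite invr_ge0; lra.
  by rewrite lef_pV2 ?posrE; lra.
have i2 : (m + 1) * nrm (T (y n.+1) - T (y n)) <= (m + 1) * nrm (y n.+1 - y n).
  by apply: ler_wpM2l => //; lra.

have : 2 * R0 * (1 + (Hs R n + m^-1)) = 2 * R0 * (1 + Hs R n) + 2 * R0 / m by ring.
move=> ->.
move: i1 i2 IH; set p := nrm (T (y n) - x0) / (m + 1).
set q := (m + 1) * nrm (T (y n.+1) - T (y n)).
set r := (m + 1) * nrm (y n.+1 - y n).
set t := 2 * R0 / m. set hh := 2 * R0 * (1 + Hs R n).
move=> *; lra.
Qed.


Lemma det_res N : nrm (y N - T (y N)) <= 2 * R0 * (2 + Hs R N) / N.+1%:R.
Proof.
have R00 : 0 <= R0 by exact: nrm_ge0.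
have H0 := Hs_ge0 R N.
have t := nrm_tri Hn (y N) (y N.+1) (T (y N)).
rewrite (nrmB Hn (y N) (y N.+1)) in t.
have e : y N.+1 - T (y N) = (N.+2%:R)^-1 *: (- (T (y N) - x0)).
  by rewrite -one_bet; apply/rowP => i; rewrite /y /= !mxE; ring.
rewrite e (nrmZ Hn) (nrmN Hn) ger0_norm ?invr_ge0 // in t.
have h1 := Ty_x0 N.
have h2 := ydiff N.
have n1 : 0 < N.+1%:R :> R by rewrite ltr0n.
have n2 : N.+2%:R = N.+1%:R + 1 :> R by rewrite -natr1.
rewrite n2 in t h2.
move: t h1 h2; set a := nrm (y N.+1 - y N); set b := nrm (T (y N) - x0).
set H := Hs R N; set m := N.+1%:R => t h1 h2.
have hb : a <= 2 * R0 * (1 + H) / (m + 1).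
  by rewrite ler_pdivlMr; lra.
have hc : (m + 1)^-1 * b <= 2 * R0 / (m + 1).
  by rewrite mulrC ler_pM2r ?invr_gt0; lra.
apply: le_trans t _.
apply: le_trans (lerD hb hc) _.
rewrite -mulrDl.
have -> : 2 * R0 * (1 + H) + 2 * R0 = 2 * R0 * (2 + H) by ring.
apply: ler_pM => //; first by rewrite /H; nra.
  by rewrite invr_ge0; lra.
by rewrite lef_pV2 ?posrE; lra.
Qed.
End Det.

Lemma sum_sub_const (R : realType) (d : nat) (Xi : Type) (u : Xi -> 'rV[R]_d) (m : 'rV[R]_d) (s : seq Xi) :
  \sum_(xi <- s) (u xi - m) = \sum_(xi <- s) u xi - m *+ size s.
Proof.
elim: s => [|xi s IH]; first by rewrite !big_nil subrr.
by rewrite !big_cons IH /= mulrS opprD addrACA.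
Qed.

Lemma Hs_le (R : realType) m n : (m <= n)%N -> Hs R m <= Hs R n.
Proof.
move=> mn; rewrite /Hs [X in _ <= X](big_cat_nat _ (n := m.+1)) //= ?ltnS //.
by rewrite lerDl; apply: sumr_ge0 => j _; rewrite invr_ge0.
Qed.

Section Stoch.
Variables (R : realType) (d : nat) (nrm : 'rV[R]_d -> R) (T : 'rV[R]_d -> 'rV[R]_d)
  (dX : measure_display) (Xi : measurableType dX) (D : R.-pker (Rd R d) ~> Xi)
  (Tt : 'rV[R]_d -> Xi -> 'rV[R]_d) (sigma : R) (x0 : 'rV[R]_d).
Hypothesis Hn : is_norm nrm.
Hypothesis HT : nonexpansive nrm T.
Hypothesis Hint : forall (x : 'rV[R]_d) (i : 'I_d),
     (D x).-integrable setT (fun xi => (Tt x xi ord0 i)%:E) /\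
     (\int[D x]_xi (Tt x xi ord0 i)%:E = (T x ord0 i)%:E)%E.
Hypothesis Hvar : forall x : 'rV[R]_d,
     (\int[D x]_xi (sqnorm2 (Tt x xi - T x))%:E <= (sigma ^+ 2)%:E)%E.

Let s2 := sigma ^+ 2 + 1.
Definition cs := @cN R d nrm * Num.sqrt (sigma ^+ 2 + 1).
Let bt := (fun n : nat => (n%:R / (n.+1)%:R : R)%R).
Let kk := (fun n : nat => (n ^ 4)%N).
Let y := ydet R d T x0.

Lemma cs_ge0 : 0 <= cs.
Proof. by rewrite /cs mulr_ge0 ?sqrtr_ge0 // cN_ge0. Qed.

Lemma HE_S f r n x : halpern_exp D Tt x0 bt kk f r.+1 n x =
  iid_int (D x) (kk n.+1) (fun s => halpern_exp D Tt x0 bt kk f r n.+1 (halpern_step Tt x0 bt kk n.+1 x s)).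
Proof. by []. Qed.

Lemma HE_ge0 f : (forall z, (0 <= f z)%E) ->
  forall r n x, (0 <= halpern_exp D Tt x0 bt kk f r n x)%E.
Proof.
move=> f0; elim=> [|r IH] n x; first exact: f0.
rewrite HE_S.
by apply: iid_int_ge0 => s _; exact: IH.
Qed.

Lemma step_bound n x (A B : R) : 0 <= A -> 0 <= B ->
  (iid_int (D x) (kk n.+1)
     (fun s => (A * nrm (halpern_step Tt x0 bt kk n.+1 x s - y n.+1) + B)%:E)
   <= (A * bet R n.+1 * (nrm (x - y n) + cs / (n.+1%:R) ^+ 2) + B)%:E)%E.
Proof.
move=> A0 B0.
set K := kk n.+1.
have K0 : 0 < K%:R :> R by rewrite ltr0n /K /kk expn_gt0.
have b0 := bet_ge0 R n.+1.
set a := A * bet R n.+1 * (K%:R)^-1 * @cN R d nrm.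
set b := A * bet R n.+1 * nrm (x - y n) + B.
have a0 : 0 <= a by rewrite /a !mulr_ge0 ?invr_ge0 ?cN_ge0 // ltW.
have bb0 : 0 <= b by rewrite /b addr_ge0 // !mulr_ge0 // nrm_ge0.
apply: (@le_trans _ _ (iid_int (D x) K (fun s => (a * Num.sqrt (sqnorm2 (0 + \sum_(xi <- s) (Tt x xi - T x))) + b)%:E))).
  apply: iid_int_le => s hs; split.
    by rewrite lee_fin addr_ge0 // mulr_ge0 // nrm_ge0.
  rewrite lee_fin add0r.
  set S := \sum_(xi <- s) (Tt x xi - T x).
  have e : halpern_step Tt x0 bt kk n.+1 x s - y n.+1 =
     bet R n.+1 *: ((K%:R)^-1 *: S + (T x - T (y n))).
    rewrite /halpern_step /S sum_sub_const hs /y /= -/K.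
    set U := \sum_(xi <- s) Tt x xi.
    rewrite -[T x *+ K]scaler_nat /bt /bet; apply/rowP => i; rewrite !mxE.
    field; rewrite gt_eqF //=; apply/negP => /eqP; have : 0 <= n%:R :> R by []; lra.
  rewrite e (nrmZ Hn) ger0_norm //.
  have h1 := nrmD Hn ((K%:R)^-1 *: S) (T x - T (y n)).
  have Ki : 0 <= (K%:R)^-1 :> R by rewrite invr_ge0 ltW.
  rewrite (nrmZ Hn) (ger0_norm Ki) in h1.
  have h2 := nrm_le_euclid Hn S.
  have h3 := HT x (y n).
  have h4 : nrm ((K%:R)^-1 *: S + (T x - T (y n))) <= (K%:R)^-1 * (@cN R d nrm * Num.sqrt (sqnorm2 S)) + nrm (x - y n).
    by apply: le_trans h1 _; apply: lerD => //; apply: ler_wpM2l.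
  have h5 : A * (bet R n.+1 * nrm ((K%:R)^-1 *: S + (T x - T (y n)))) <= A * (bet R n.+1 * ((K%:R)^-1 * (@cN R d nrm * Num.sqrt (sqnorm2 S)) + nrm (x - y n))).
    by apply: ler_wpM2l => //; apply: ler_wpM2l.
  have e2 : A * (bet R n.+1 * ((K%:R)^-1 * (@cN R d nrm * Num.sqrt (sqnorm2 S)) + nrm (x - y n))) = a * Num.sqrt (sqnorm2 S) + (A * bet R n.+1 * nrm (x - y n)) by rewrite /a; ring.
  rewrite e2 in h5; rewrite /b; lra.
have HP := @prob_kernel _ _ _ _ _ D x.
have Hv : (\int[D x]_xi (sqnorm2 (Tt x xi - T x))%:E <= s2%:E)%E.
  by apply: le_trans (Hvar x) _; rewrite lee_fin /s2 lerDl.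
have s2p : 0 < s2 by rewrite /s2 ltr_wpDl // sqr_ge0.
apply: le_trans (@iidA _ _ _ _ (D x) HP (fun xi => Tt x xi) (T x) s2 (Hint x) Hv s2p K 0 a b a0 bb0) _.
rewrite lee_fin /b addrA lerD2r.
have sq0 : sqnorm2 (0 : 'rV[R]_d) = 0 by rewrite /sqnorm2 big1 // => i _; rewrite mxE expr0n.
have eK : K%:R = (n.+1%:R ^+ 2) ^+ 2 :> R by rewrite /K /kk natrX -exprM.
rewrite sq0 add0r sqrtrM ?ler0n // eK sqrtr_sqr ger0_norm ?exprn_ge0 //.
have m0 : n.+1%:R != 0 :> R by rewrite pnatr_eq0.
rewrite /a /cs -/s2 eK le_eqVlt; apply/orP; left; apply/eqP; field.
by apply/negP => /eqP; have : 0 <= n%:R :> R by []; lra.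
Qed.

Lemma main_ind f (A B : R) N : 0 <= A -> 0 <= B ->
  (forall z, (0 <= f z)%E /\ (f z <= (A * nrm (z - y N) + B)%:E)%E) ->
  forall r n, (n + r)%N = N -> forall x,
  (halpern_exp D Tt x0 bt kk f r n x <=
    (A * n.+1%:R / (n + r).+1%:R * nrm (x - y n)
     + A * cs / (n + r).+1%:R * (Hs R (n + r) - Hs R n) + B)%:E)%E.
Proof.
move=> A0 B0 Hf; elim=> [|r IH] n hn x.
  rewrite addn0 in hn *; subst N.
  have m0 : n.+1%:R != 0 :> R by rewrite pnatr_eq0.
  by rewrite subrr mulr0 addr0 mulfK //; exact: (proj2 (Hf x)).
rewrite HE_S.
have hN : (n.+1 + r)%N = N by rewrite addSnnS.
set M := (n.+1 + r).+1%:R : R.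
set A' := A * n.+2%:R / M.
set B' := A * cs / M * (Hs R (n.+1 + r) - Hs R n.+1) + B.
have M0 : 0 < M by rewrite /M ltr0n.
have A'0 : 0 <= A' by rewrite /A' divr_ge0 ?mulr_ge0 // ltW.
have B'0 : 0 <= B'.
  rewrite /B' addr_ge0 // mulr_ge0 //.
    by apply: divr_ge0; [apply: mulr_ge0 => //; exact: cs_ge0 | exact: ltW].
  by rewrite subr_ge0; apply: Hs_le; rewrite leq_addr.
apply: (@le_trans _ _ (iid_int (D x) (kk n.+1)
     (fun s => (A' * nrm (halpern_step Tt x0 bt kk n.+1 x s - y n.+1) + B')%:E))).
  apply: iid_int_le => s _; split.
    apply: HE_ge0 => z; exact: (proj1 (Hf z)).
  have := IH n.+1 hN (halpern_step Tt x0 bt kk n.+1 x s).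
  by rewrite /B' /A' /M addrA.
apply: le_trans (step_bound n x A' B' A'0 B'0) _.
have e : (n + r.+1 = n.+1 + r)%N by rewrite addSnnS.
rewrite lee_fin e -/M.
have m0 : 0 < n.+1%:R :> R by rewrite ltr0n.
have e2 : n.+2%:R = n.+1%:R + 1 :> R by rewrite -natr1.
rewrite /A' /B' (HsS R n) /bet e2.
set m := n.+1%:R.
rewrite le_eqVlt; apply/orP; left; apply/eqP; field.
have n0 : 0 <= n%:R :> R by [].
have r0 : 0 <= r%:R :> R by [].
by apply/and3P; split; apply/negP => /eqP; lra.

Qed.

Variable z : 'rV[R]_d.
Hypothesis Hz : T z = z.

Lemma expect_bound N :
  (halpern_expect D Tt x0 bt kk N (fun x => (nrm (x - T x))%:E) <=
   ((2 * cs + 2 * nrm (x0 - z)) * (2 + Hs R N) / N.+1%:R)%:E)%E.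
Proof.
set B := nrm (y N - T (y N)).
have B0 : 0 <= B by exact: nrm_ge0.
have Hf : forall w, (0 <= (nrm (w - T w))%:E)%E /\ ((nrm (w - T w))%:E <= (2 * nrm (w - y N) + B)%:E)%E.
  move=> w; split; first by rewrite lee_fin nrm_ge0.
  rewrite lee_fin.
  have t1 := nrm_tri Hn w (y N) (T w).
  have t2 := nrm_tri Hn (y N) (T (y N)) (T w).
  have t3 := HT (y N) w.
  rewrite (nrmB Hn (y N) w) in t3.
  rewrite -/B in t2; lra.
have := @main_ind (fun x => (nrm (x - T x))%:E) 2 B N (ler0n R 2) B0 Hf N 0 (add0n N) x0.
rewrite /halpern_expect.
move/le_trans; apply.
rewrite lee_fin add0n subrr (nrm0 Hn) mulr0 add0r.
have -> : Hs R 0 = 0 by rewrite /Hs big_geq.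
rewrite subr0.
have hd := @det_res R d nrm T x0 z Hn HT Hz N.
rewrite -/y -/B in hd.
have R00 : 0 <= nrm (x0 - z) by exact: nrm_ge0.
have c0 := cs_ge0.
have H0 := Hs_ge0 R N.
have n1 : 0 < N.+1%:R :> R by rewrite ltr0n.
move: hd; set H := Hs R N; set m := N.+1%:R; set R0 := nrm (x0 - z) => hd.
apply: le_trans (lerD (lexx _) hd) _.
have -> : 2 * cs / m * H + 2 * R0 * (2 + H) / m = (2 * cs * H + 2 * R0 * (2 + H)) * m^-1 by ring.
rewrite ler_pM2r ?invr_gt0 //.
rewrite /H; nra.
Qed.
End Stoch.

Lemma ln_le_sub1 (R : realType) (y : R) : 0 < y -> ln y <= y - 1.
Proof.
move=> y0; have := @le_ln1Dx R (y - 1).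
rewrite [1 + _]addrC subrK; apply; lra.
Qed.

Lemma Hs_ln (R : realType) (N : nat) : (0 < N)%N -> Hs R N <= 1 + ln N%:R.
Proof.
elim: N => [//|N IH] _.
case: N IH => [|N] IH.
  by rewrite /Hs big_nat1 invr1 ln1 addr0.
rewrite HsS.
have {}IH := IH isT.
have n0 : 0 < N.+1%:R :> R by rewrite ltr0n.
have n1 : 0 < N.+2%:R :> R by rewrite ltr0n.
have h := @le_ln1Dx R (- (N.+2%:R)^-1).
have e : 1 + - (N.+2%:R)^-1 = N.+1%:R / N.+2%:R :> R.
  have e2 : N.+2%:R = N.+1%:R + 1 :> R by rewrite -natr1.
  rewrite e2; field; have : 0 <= N%:R :> R by []; move=> ?; apply/negP => /eqP; lra.
rewrite e ln_div ?posrE // in h.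
have : - (N.+2%:R)^-1 > -1 :> R.
  by rewrite ltrN2 invf_lt1 // ltr1n.
move=> /h {}h.
move: IH h; set a := ln (N.+1%:R); set b := ln (N.+2%:R); set c := Hs R N.+1; set q := (N.+2%:R)^-1. move=> IH h; lra.
Qed.

Lemma sum_pow4 N : (\sum_(1 <= n < N.+1) n ^ 4 <= N ^ 5)%N.
Proof.
elim: N => [|N IH]; first by rewrite big_geq.
rewrite big_nat_recr //= (expnS N.+1 4) mulSn addnC leq_add2l.
apply: leq_trans IH _; rewrite expnS leq_mul2l; apply/orP; right.
by rewrite leq_exp2r // leqnSn.
Qed.

Theorem corollary1 (R : realType) (d : nat) (nrm : 'rV[R]_d -> R)
  (T : 'rV[R]_d -> 'rV[R]_d)
  (dX : measure_display) (Xi : measurableType dX)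
  (D : R.-pker (Rd R d) ~> Xi)
  (Tt : 'rV[R]_d -> Xi -> 'rV[R]_d) (sigma : R) (x0 : 'rV[R]_d) :
  is_norm nrm ->
  nonexpansive nrm T ->
  (exists z, T z = z) ->
  (* joint measurability of the oracle (implicit regularity) *)
  measurable_fun setT (fun p : (Rd R d * Xi)%type => (Tt p.1 p.2 : Rd R d)) ->
  (* unbiasedness: E_{xi ~ D_x} Tt(x, xi) = T x *)
  (forall (x : 'rV[R]_d) (i : 'I_d),
     (D x).-integrable setT (fun xi => (Tt x xi ord0 i)%:E) /\
     (\int[D x]_xi (Tt x xi ord0 i)%:E = (T x ord0 i)%:E)%E) ->
  (* uniformly bounded variance in the Euclidean norm *)
  (forall x : 'rV[R]_d,
     (\int[D x]_xi (sqnorm2 (Tt x xi - T x))%:E <= (sigma ^+ 2)%:E)%E) ->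
  exists (C : R) (p : nat), forall eps : R, 0 < eps ->
    exists N : nat,
      (halpern_expect D Tt x0 (fun n : nat => (n%:R / (n.+1)%:R : R)%R) (fun n => (n ^ 4)%N)
         N (fun x => (nrm (x - T x))%:E) <= eps%:E)%E /\
      ((\sum_(1 <= n < N.+1) n ^ 4)%N%:R <= C * eps ^- 5 * (1 + `|ln eps|) ^+ p).
Proof.
move=> Hn HT [z Hz] _ Hint Hvar.
have EB := @expect_bound R d nrm T dX Xi D Tt sigma x0 Hn HT Hint Hvar z Hz.
set K0 := 2 * cs R d nrm sigma + 2 * nrm (x0 - z) + 1.
have K00 : 1 <= K0.
  have := cs_ge0 R d nrm sigma Hn; have := nrm_ge0 Hn (x0 - z); rewrite /K0; lra.
set M := 16 * (K0 + 1) ^+ 2.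
have M1 : 1 <= M by rewrite /M; nra.
exists (32 * M ^+ 5), 10%N => eps eps0.
set L := 1 + `|ln eps|.
have L1 : 1 <= L by rewrite /L lerDl.
have Hp : 0 <= 32 * M ^+ 5 * eps ^- 5 * L ^+ 10.
  apply: mulr_ge0; [apply: mulr_ge0; [apply: mulr_ge0 => //; apply: exprn_ge0; lra | by rewrite invr_ge0 exprn_ge0 // ltW] | apply: exprn_ge0; lra].
have EBr : forall N, (halpern_expect D Tt x0 (fun n : nat => (n%:R / (n.+1)%:R : R)%R) (fun n => (n ^ 4)%N)
         N (fun x => (nrm (x - T x))%:E) <= (K0 * (2 + Hs R N) / N.+1%:R)%:E)%E.
  move=> N; apply: le_trans (EB N) _; rewrite lee_fin ler_pM2r ?invr_gt0 ?ltr0n //.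
  apply: ler_wpM2r; first by have := Hs_ge0 R N; lra.
  by rewrite /K0 lerDl.
have [big|small] := lerP (2 * K0) eps.
  exists 0%N; split.
    apply: le_trans (EBr 0%N) _; rewrite lee_fin.
    by rewrite /Hs big_geq // addr0 divr1 mulrC.
  by rewrite big_geq.
have M2 : 2 * K0 <= M by rewrite /M; nra.
have L2 : 1 <= L ^+ 2 by rewrite expr2; nra.
set x := M * L ^+ 2 / eps.
have x1 : 1 <= x.
  rewrite /x ler_pdivlMr // mul1r; nra.
have x0' : 0 < x by lra.
set N := (Num.truncn x).+1.
have xN : x < N%:R by exact: truncnS_gt.
have Nx : N%:R <= x + 1.
  rewrite /N -natr1 lerD2r truncn_le; lra.
have N0 : 0 < N%:R :> R by rewrite ltr0n.
have N2x : N%:R <= 2 * x by lra.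
have xe : x * eps = M * L ^+ 2 by rewrite /x; field; rewrite gt_eqF.
have lnN : ln N%:R <= 28 + 2 * K0 + 3 * L.
  have h1 : ln N%:R <= ln (2 * x).
    by rewrite ler_ln ?posrE //; lra.
  apply: le_trans h1 _.
  have e2x : 2 * x = 32 * ((K0 + 1) ^+ 2 * (L ^+ 2 * eps^-1)).
    by rewrite /x /M; field; rewrite gt_eqF.
  have p32 : (32 : R) \in Num.pos by rewrite posrE.
  have pK : (K0 + 1) ^+ 2 \in Num.pos by rewrite posrE exprn_gt0 //; lra.
  have pL : L ^+ 2 \in Num.pos by rewrite posrE exprn_gt0 //; lra.
  have pe : eps^-1 \in Num.pos by rewrite posrE invr_gt0.
  have pLe : L ^+ 2 * eps^-1 \in Num.pos by rewrite posrE mulr_gt0 // -posrE.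
  have pKLe : (K0 + 1) ^+ 2 * (L ^+ 2 * eps^-1) \in Num.pos by rewrite posrE mulr_gt0 // -posrE.
  rewrite e2x (lnM p32 pKLe) (lnM pK pLe) (lnM pL pe) lnXn ?lnXn; last 2 first.
    lra.
    lra.
  rewrite lnV ?posrE //.
  have a1 := @ln_le_sub1 R 32 ltac:(lra).
  have a2 := @ln_le_sub1 R (K0 + 1) ltac:(lra).
  have a3 := @ln_le_sub1 R L ltac:(lra).
  have a4 := ler_norm (- ln eps); rewrite normrN in a4.
  rewrite !mulr2n; rewrite /L in a3 *; lra.
exists N; split.
  apply: le_trans (EBr N) _; rewrite lee_fin.
  have hH := Hs_ln R N isT.
  rewrite ler_pdivrMr; last by rewrite ltr0n.
  have G1 : 2 + Hs R N <= (34 + 2 * K0) * L ^+ 2.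
    have : L <= L ^+ 2 by rewrite expr2; nra.
    move=> LL; nra.
  have G0 : 0 <= 2 + Hs R N by have := Hs_ge0 R N; lra.
  have h1 : K0 * (2 + Hs R N) <= K0 * ((34 + 2 * K0) * L ^+ 2).
    by apply: ler_wpM2l => //; lra.
  have h2 : K0 * ((34 + 2 * K0) * L ^+ 2) <= M * L ^+ 2.
    rewrite mulrA ler_pM2r; last lra.
    by rewrite /M; nra.
  have h3 : x * eps <= eps * N.+1%:R.
    rewrite mulrC ler_pM2l //; rewrite -natr1; lra.
  lra.
have s1 : ((\sum_(1 <= n < N.+1) n ^ 4)%N%:R : R) <= (N ^ 5)%N%:R by rewrite ler_nat sum_pow4.
apply: le_trans s1 _.
rewrite natrX.
apply: (@le_trans _ _ ((2 * x) ^+ 5)).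
  by rewrite ler_pXn2r // ?nnegrE //; lra.
rewrite le_eqVlt; apply/orP; left; apply/eqP.
rewrite /x; field; by rewrite gt_eqF.
Qed.
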